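(* Let $n\in\mathbb{N}$ and $f\colon\{-1,1\}^n\to[-1,1]$ with $f(1,\dots,1)=1$ and $f(-1,\dots,-1)=-1$. Let $\rho$ be the distribution of $p=\frac{e^t-1}{e^t+1}$ where $t$ is uniform on $[-\ln(5n),\ln(5n)]$. Then $$\mathbb{E}_{p\sim\rho,\ x_{1\ldots n}\sim p}\left[f(x)\cdot\sum_{i=1}^n(x_i-p)\right]\ge\frac{1}{\ln(5n)}.$$
   Context: For $p\in[-1,1]$, $x_{1\ldots n}\sim p$ means $x=(x_1,\dots,x_n)$ where the $x_i\in\{-1,1\}$ are independent with $\mathbb{E}[x_i]=p$, i.e. $\Pr[x_i=1]=\frac{1+p}{2}$. *)

(* Defs.v *)
From HB Require Import structures.
From mathcomp Require Import all_boot all_order all_algebra.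
From mathcomp Require Import all_classical all_reals all_analysis.
Set Implicit Arguments. Unset Strict Implicit. Unset Printing Implicit Defensive.
Import Order.TTheory GRing.Theory Num.Theory.
Local Open Scope ring_scope.

(* A point of {-1,1}^n is encoded as x : {ffun 'I_n -> bool};
   its i-th coordinate is sgnb (x i) ∈ {-1,1} (true ↦ 1, false ↦ -1). *)
Definition sgnb {R : pzRingType} (b : bool) : R := if b then 1 else -1.

Definition hcube (n : nat) := {ffun 'I_n -> bool}.

(* Pr[x] when x_{1..n} ~ p : independent coordinates with Pr[x_i = 1] = (1+p)/2 *)
Definition bprob {R : realType} (n : nat) (p : R) (x : hcube n) : R :=
  \prod_(i < n) ((1 + p * sgnb (x i)) / 2).

Definition inner_exp {R : realType} (n : nat) (f : hcube n -> R) (p : R) : R :=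
  \sum_(x : hcube n) bprob p x * (f x * \sum_(i < n) (sgnb (x i) - p)).

Definition p_of_t {R : realType} (t : R) : R := (expR t - 1) / (expR t + 1).

(* E_{p ~ rho}[ g p ] where rho is the law of p_of_t t, t uniform on [-L, L]:
   the normalised Lebesgue integral over [-L, L]. *)
Definition rho_exp {R : realType} (L : R) (g : R -> R) : \bar R :=
  ((2 * L)^-1)%:E * (\int[lebesgue_measure]_(t in `[(- L)%R, L]%classic) (g (p_of_t t))%:E)%E.

(* Main.v *)
Require Import Defs.
From HB Require Import structures.
From mathcomp Require Import all_boot all_order all_algebra.
From mathcomp Require Import all_classical all_reals all_analysis.
From mathcomp Require Import ring lra.
Import Order.TTheory GRing.Theory Num.Theory.
Local Open Scope ring_scope.

Lemma is_deriveV' (R : realType) (f : R -> R) x v df : f x != 0 ->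
  is_derive x v f df -> is_derive x v (fun y => (f y)^-1) (- (f x)^-2 *: df).
Proof.
move=> fx0 H; have df' : derivable f x v by exact: ex_derive.
apply: DeriveDef; first exact: derivableV.
by rewrite deriveV // derive_val.
Qed.

Lemma p_of_t_derive (R : realType) (t : R) :
  is_derive t 1 (@p_of_t R) ((1 - p_of_t t ^+ 2) / 2).
Proof.
have he := expR_gt0 t.
have e1 : expR t + 1 != 0 by rewrite gt_eqF // ltr_wpDr.
have E : @p_of_t R = (expR - cst 1) * (fun y => ((expR + cst 1) y)^-1).
  by apply/funext => y; rewrite /p_of_t.
have H1 : is_derive t 1 (expR - cst 1) (expR t) := is_derive_eq (is_deriveB (is_derive_expR t) (is_derive_cst (1:R) t 1)) (subr0 _).
have H2 : is_derive t 1 (expR + cst 1) (expR t) := is_derive_eq (is_deriveD (is_derive_expR t) (is_derive_cst (1:R) t 1)) (addr0 _).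
have H3 := @is_deriveV' R (expR + cst 1) t 1 (expR t) e1 H2.
have H4 := is_deriveM H1 H3.
rewrite E; apply: (is_derive_eq H4).
rewrite /= !fctE /= /GRing.scale /=.
set e := expR t in e1 *.
field.
by rewrite e1.
Qed.
Lemma bprob_split (R : realType) n (p : R) (x : hcube n) :
  bprob p x = ((1 + p) / 2) ^+ #|[pred i | x i]| * ((1 - p) / 2) ^+ #|[pred i | ~~ x i]|.
Proof.
rewrite /bprob (bigID (fun i => x i)) /=.
have E1 : \prod_(i < n | x i) ((1 + p * sgnb (x i)) / 2) = \prod_(i in [pred i0 | x i0]) ((1 + p) / 2).
  apply: eq_big => [i|i ->]. by [].  by rewrite /sgnb mulr1.
have E2 : \prod_(i < n | ~~ x i) ((1 + p * sgnb (x i)) / 2) = \prod_(i in [pred i0 | ~~ x i0]) ((1 - p) / 2).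
  apply: eq_big => [i|i /negbTE ->]. by [].  by rewrite /sgnb mulrN1.
by rewrite E1 E2 !prodr_const.
Qed.

Lemma sum_split (R : realType) n (p : R) (x : hcube n) :
  \sum_(i < n) (sgnb (x i) - p) = #|[pred i | x i]|%:R * (1 - p) + #|[pred i | ~~ x i]|%:R * (-1 - p).
Proof.
rewrite (bigID (fun i => x i)) /=.
have E1 : \sum_(i < n | x i) (sgnb (x i) - p) = \sum_(i in [pred i0 | x i0]) (1 - p).
  apply: eq_big => [i|i ->]. by [].  by [].
have E2 : \sum_(i < n | ~~ x i) (sgnb (x i) - p) = \sum_(i in [pred i0 | ~~ x i0]) (-1 - p).
  apply: eq_big => [i|i /negbTE ->]. by [].  by [].
by rewrite E1 E2 !sumr_const !mulr_natl.
Qed.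

Lemma natr_pred_expr (R : realType) (k : nat) (a m : R) :
  (k%:R * a ^+ k.-1) * (a * m) = k%:R * a ^+ k * m.
Proof. case: k => [|k]; first by rewrite !mul0r. by rewrite /= exprS; ring. Qed.

Lemma is_derive_ext {R : realType} {f g : R -> R} {x df dg : R} :
  (forall y, f y = g y) -> is_derive x 1 f df -> df = dg -> is_derive x 1 g dg.
Proof. move=> E H <-; suff -> : g = f by []. by apply/funext => y; rewrite E. Qed.

Lemma term_derive (R : realType) n (x : hcube n) (c t : R) :
  is_derive t 1 (fun s => bprob (p_of_t s) x * (2 * c))
    (bprob (p_of_t t) x * (c * \sum_(i < n) (sgnb (x i) - p_of_t t))).
Proof.
set k := #|[pred i | x i]|; set k' := #|[pred i | ~~ x i]|.
set p := p_of_t t.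
have Ha : is_derive t 1 (fun s => (1 + p_of_t s) / 2) ((1 + p)/2 * ((1 - p)/2)).
  have H0 := (is_deriveZ (2^-1) (is_deriveD (is_derive_cst (1:R) t 1) (p_of_t_derive _ t))).
  apply: (is_derive_ext _ H0).
    by move=> y; rewrite /= !fctE /GRing.scale /= mulrC.
  by rewrite /GRing.scale /= -/p; field.
have Hb : is_derive t 1 (fun s => (1 - p_of_t s) / 2) ((1 - p)/2 * - ((1 + p)/2)).
  apply: (is_derive_ext _ (is_deriveZ (2^-1) (is_deriveB (is_derive_cst (1:R) t 1) (p_of_t_derive _ t)))).
    by move=> y; rewrite /= !fctE /GRing.scale /= mulrC.
  by rewrite /GRing.scale /= -/p; field.
have H := is_deriveM (is_deriveM (is_deriveX k Ha) (is_deriveX k' Hb)) (is_derive_cst (2 * c) t 1).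
apply: (is_derive_ext _ H).
  by move=> y; rewrite /= !fctE bprob_split.
rewrite /GRing.scale /= !fctE -/p.
rewrite !natr_pred_expr bprob_split sum_split -/k -/k'.
set u := ((1 + p) / 2) ^+ k; set v := ((1 - p) / 2) ^+ k'.
clearbody u v p; move: (k%:R : R) (k'%:R : R) => K K'.
have key : forall u v K K' p c : R, u * v * 0 +
  2 * c * (u * (K' * v * - ((1 + p) / 2)) + v * (K * u * ((1 - p) / 2))) =
  u * v * (c * (K * (1 - p) + K' * (-1 - p))) by move=> *; field.
exact: key.
Qed.

Lemma derivable_ext {R : realType} {f g : R -> R} {t : R} :
  (forall y, f y = g y) -> derivable f t 1 -> derivable g t 1.
Proof. move=> E; suff -> : g = f by []. by apply/funext => y; rewrite E. Qed.

Lemma derivable_sumseq {R : realType} (I : Type) (r : seq I) (h : I -> R -> R) (t : R) :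
  (forall i, derivable (h i) t 1) -> derivable (fun s => \sum_(i <- r) h i s) t 1.
Proof.
move=> H; elim: r => [|a r IH].
  apply: (derivable_ext _ (derivable_cst (0:R) t 1)) => y; by rewrite big_nil.
apply: (derivable_ext _ (derivableD (H a) IH)) => y; by rewrite big_cons.
Qed.

Lemma is_derive_sumseq {R : realType} (I : Type) (r : seq I) (h : I -> R -> R) (dh : I -> R) (t : R) :
  (forall i, is_derive t 1 (h i) (dh i)) -> is_derive t 1 (fun s => \sum_(i <- r) h i s) (\sum_(i <- r) dh i).
Proof.
move=> H; elim: r => [|a r IH].
  apply: (is_derive_ext _ (is_derive_cst (0:R) t 1)) => [y|]; by rewrite big_nil.
apply: (is_derive_ext _ (is_deriveD (H a) IH)) => [y|]; by rewrite big_cons.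
Qed.

Lemma bprob_ge0 (R : realType) n (p : R) (x : hcube n) : -1 <= p <= 1 -> 0 <= bprob p x.
Proof.
move=> /andP[hp1 hp2]; rewrite /bprob; apply: prodr_ge0 => i _.
by case: (x i); rewrite /sgnb; lra.
Qed.

Lemma bprob_sum (R : realType) n (p : R) : \sum_(x : hcube n) bprob p x = 1.
Proof.
have := bigA_distr_bigA (fun (i : 'I_n) (j : bool) => (1 + p * sgnb j) / 2).
rewrite /bprob => <-.
rewrite (eq_bigr (fun _ => 1)); first by rewrite prodr_const expr1n.
by move=> i _; rewrite big_bool /sgnb /=; field.
Qed.

Lemma sum_lb (R : realType) n (p : R) (g : hcube n -> R) (y : hcube n) :
  -1 <= p <= 1 -> (forall x, -1 <= g x) ->
  bprob p y * g y - (1 - bprob p y) <= \sum_(x : hcube n) bprob p x * g x.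
Proof.
move=> hp hg.
have hs := @bprob_sum R n p; rewrite (bigD1 y) //= in hs.
rewrite (bigD1 y) //=; apply: lerD => //.
have -> : 1 - bprob p y = \sum_(x | x != y) bprob p x by rewrite -hs; ring.
rewrite -sumrN; apply: ler_sum => x _.
have := @bprob_ge0 R n p x hp; have := hg x; nra.
Qed.

Lemma bernoulli (R : realType) (m : nat) (c : R) : 0 <= c <= 1 -> 1 - m%:R * c <= (1 - c) ^+ m.
Proof.
move=> /andP[c0 c1]; elim: m => [|m IH]; first by rewrite mul0r subr0 expr0.
rewrite exprS -natr1.
have h0 : 0 <= 1 - c by lra.
have := ler_wpM2l h0 IH.
have hm : 0 <= m%:R * (c * c) :> R by apply: mulr_ge0 => //; apply: mulr_ge0.
move: hm; set X := (1 - c) ^+ m; set M := m%:R; nra.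
Qed.

Lemma isd_derivable {R : realType} {f : R -> R} {t df : R} :
  is_derive t 1 f df -> derivable f t 1.
Proof. move=> H; exact: ex_derive. Qed.

Lemma isd_val {R : realType} {f : R -> R} {t df : R} :
  is_derive t 1 f df -> (f^`())%classic t = df.
Proof. move=> H; rewrite derive1E; exact: derive_val. Qed.

Lemma p_of_t_range (R : realType) (t : R) : -1 <= p_of_t t <= 1.
Proof.
have he := expR_gt0 t; have e1 : 0 < expR t + 1 by lra.
rewrite /p_of_t ler_pdivlMr // ler_pdivrMr //; apply/andP; split; lra.
Qed.

Lemma integrand_derivable (R : realType) n (f : hcube n -> R) (t : R) :
  derivable (fun s => inner_exp f (p_of_t s)) t 1.
Proof.
rewrite /inner_exp.
apply: derivable_sumseq => x.
have hp : derivable (@p_of_t R) t 1 := isd_derivable (p_of_t_derive R t).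
have hb : derivable (fun s => bprob (p_of_t s) x) t 1.
  apply: (derivable_ext _ (isd_derivable (@term_derive R n x (2^-1) t))) => y.
  by rewrite mulfV ?mulr1.
have hS : derivable (fun s => \sum_(i < n) (sgnb (x i) - p_of_t s)) t 1.
  apply: derivable_sumseq => i.
  exact: (derivable_ext (fun y => erefl) (derivableB (derivable_cst (sgnb (x i) : R) t 1) hp)).
have hS' := derivableM (derivable_cst (f x) t 1) hS.
exact: (derivable_ext (fun y => erefl) (derivableM hb hS')).
Qed.

Theorem lemma4p2 (R : realType) (n : nat) (f : hcube n -> R)
  (hf : forall x, -1 <= f x <= 1)
  (h1 : f [ffun => true] = 1)
  (hm1 : f [ffun => false] = -1) :
  (((ln (5 * n%:R : R))^-1)%:E <= rho_exp (ln (5 * n%:R)) (inner_exp f))%E.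
Proof.
have n0 : (0 < n)%N.
  case: n f hf h1 hm1 => // f hf h1 hm1.
  have E : [ffun => true] = [ffun => false] :> hcube 0 by apply/ffunP => -[].
  have : f [ffun => true] = f [ffun => false] by rewrite E.
  rewrite h1 hm1.
  by move=> H; exfalso; lra.
set N : R := 5 * n%:R.
have hN : 1 < N.
  have : 1 <= n%:R :> R by rewrite ler1n.
  rewrite /N; lra.
set L := ln N.
have L0 : 0 < L by exact: ln_gt0.
set G := fun t => \sum_(x : hcube n) bprob (p_of_t t) x * (2 * f x).
have dG : forall t : R, is_derive t 1 G (inner_exp f (p_of_t t)).
  move=> t; rewrite /G /inner_exp.
  apply: is_derive_sumseq => x; exact: term_derive.
have FTC : (\int[lebesgue_measure]_(t in `[(- L)%R, L]%classic) (inner_exp f (p_of_t t))%:E =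
    (G L)%:E - (G (- L))%:E)%E.
  apply: continuous_FTC2.
  - lra.
  - by apply: derivable_within_continuous => y _; exact: integrand_derivable.
  - split.
    + by move=> y _; exact: isd_derivable (dG y).
    + apply: cvg_at_right_filter.
      by apply/differentiable_continuous/derivable1_diffP; exact: isd_derivable (dG _).
    + apply: cvg_at_left_filter.
      by apply/differentiable_continuous/derivable1_diffP; exact: isd_derivable (dG _).
  - by move=> y _; exact: isd_val (dG y).
rewrite /rho_exp -/N -/L FTC -EFinB -EFinM lee_fin.
have N0 : 0 < N by lra.
have eL : expR L = N by rewrite /L lnK // posrE.
have eNL : expR (- L) = N^-1 by rewrite expRN eL.
set q := N / (N + 1).
have N1 : N + 1 != 0 by rewrite gt_eqF //; lra.
have N0' : N != 0 by rewrite gt_eqF.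
have hq1 : (1 + p_of_t L) / 2 = q.
  rewrite /p_of_t eL /q; field; exact: N1.
have hq2 : (1 - p_of_t (- L)) / 2 = q.
  by rewrite /p_of_t eNL /q; field; rewrite N1 N0'.
have B1 : bprob (p_of_t L) ([ffun => true] : hcube n) = q ^+ n.
  have -> : q ^+ n = \prod_(i < n) q by rewrite prodr_const card_ord.
  by rewrite /bprob; apply: eq_bigr => i _; rewrite ffunE /sgnb mulr1 -hq1.
have B2 : bprob (p_of_t (- L)) ([ffun => false] : hcube n) = q ^+ n.
  have -> : q ^+ n = \prod_(i < n) q by rewrite prodr_const card_ord.
  by rewrite /bprob; apply: eq_bigr => i _; rewrite ffunE /sgnb mulrN1 -hq2.
have GLe : G L = 2 * \sum_(x : hcube n) bprob (p_of_t L) x * f x.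
  by rewrite /G mulr_sumr; apply: eq_bigr => x _; ring.
have GNLe : G (- L) = - 2 * \sum_(x : hcube n) bprob (p_of_t (- L)) x * (- f x).
  by rewrite /G mulr_sumr; apply: eq_bigr => x _; ring.
have lb1 := @sum_lb R n (p_of_t L) f [ffun => true] (p_of_t_range _ _) (fun x => proj1 (andP (hf x))).
have lb2 := @sum_lb R n (p_of_t (- L)) (fun x => - f x) [ffun => false] (p_of_t_range _ _)
  (fun x => (let: conj _ h := andP (hf x) in (ltac:(rewrite lerNr opprK; exact: h)))).
rewrite B1 h1 in lb1; rewrite /= B2 hm1 in lb2.
have hb : 3 / 4 <= q ^+ n.
  have c01 : 0 <= (N + 1)^-1 <= 1.
    apply/andP; split; first by rewrite invr_ge0; lra.
    by rewrite invf_le1; lra.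
  have := @bernoulli R n _ c01.
  have -> : 1 - (N + 1)^-1 = q by rewrite /q; field.
  suff : n%:R * (N + 1)^-1 <= 1 / 4 by lra.
  rewrite ler_pdivrMr; last by lra.
  have := ler0n R n; rewrite /N; lra.
have D2 : 2 <= G L - G (- L) by rewrite GLe GNLe; lra.
have -> : L^-1 = (2 * L)^-1 * 2 by field; rewrite gt_eqF.
by apply: ler_wpM2l => //; rewrite invr_ge0; lra.
Qed.
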